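(* Let $(\mathcal{X},\mathcal{Y},u,S)$ be a Blackwell approachability game in which every halfspace $H\supseteq S$ is forceable. Then for every horizon $T\ge1$ there is a strategy for Player 1 which, at each time $t\le T$, receives a prediction $v^t\in\mathbb{R}^d$ of the next payoff (arbitrary, revealed before $x^t$ is chosen) and chooses $x^t\in\mathcal{X}$ depending only on $v^1,\dots,v^t$ and past payoffs, such that for every sequence of predictions and every (possibly adaptive) sequence of Player 2 actions $y^1,\dots,y^T\in\mathcal{Y}$, \[ \min_{\hat{s}\in S}\Big\|\hat{s}-\frac1T\sum_{t=1}^Tu(x^t,y^t)\Big\|_2\le\frac{1}{\sqrt T}\Big(1+\frac2T\sum_{t=1}^T\|u(x^t,y^t)-v^t\|_2^2\Big). \]
   Context: A Blackwell approachability game $(\mathcal{X},\mathcal{Y},u,S)$ consists of compact convex action sets $\mathcal{X},\mathcal{Y}$, a biaffine vector payoff $u:\mathcal{X}\times\mathcal{Y}\to\mathbb{R}^d$, and a closed convex target set $S\subseteq\mathbb{R}^d$; at each time $t$ Player 1 chooses $x^t\in\mathcal{X}$, then Player 2 chooses $y^t\in\mathcal{Y}$, and Player 1 receives $u(x^t,y^t)$. A halfspace $H=\{z:\langle a,z\rangle\le b\}$ is forceable if there exists $x^*\in\mathcal{X}$ with $u(x^*,y)\in H$ for all $y\in\mathcal{Y}$. *)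

(* Defs.v *)
From HB Require Import structures.
From mathcomp Require Import all_boot all_order all_algebra.
From mathcomp Require Import all_classical all_reals all_analysis.
Set Implicit Arguments. Unset Strict Implicit. Unset Printing Implicit Defensive.
Import Order.TTheory GRing.Theory Num.Theory.
Import numFieldNormedType.Exports.
Local Open Scope classical_set_scope.
Local Open Scope ring_scope.

Section Blackwell.
Variable R : realType.

Definition dotv (d : nat) (a z : 'rV[R]_d) : R := \sum_(i < d) a 0 i * z 0 i.
Definition norm2 (d : nat) (z : 'rV[R]_d) : R := Num.sqrt (dotv z z).

Definition halfspace (d : nat) (a : 'rV[R]_d) (b : R) : set 'rV[R]_d :=
  [set z | dotv a z <= b].

Definition biaffine (n m d : nat) (X : set 'rV[R]_n) (Y : set 'rV[R]_m)
    (u : 'rV[R]_n -> 'rV[R]_m -> 'rV[R]_d) : Prop :=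
  (forall x1 x2 y (l : R), X x1 -> X x2 -> Y y -> 0 <= l <= 1 ->
     u (l *: x1 + (1 - l) *: x2) y = l *: u x1 y + (1 - l) *: u x2 y) /\
  (forall x y1 y2 (l : R), X x -> Y y1 -> Y y2 -> 0 <= l <= 1 ->
     u x (l *: y1 + (1 - l) *: y2) = l *: u x y1 + (1 - l) *: u x y2).

Definition forceable (n m d : nat) (X : set 'rV[R]_n) (Y : set 'rV[R]_m)
    (u : 'rV[R]_n -> 'rV[R]_m -> 'rV[R]_d) (H : set 'rV[R]_d) : Prop :=
  exists2 xs, X xs & forall y, Y y -> H (u xs y).

(* A predictive strategy for Player 1: given the predictions
   [:: v^1; ...; v^t] revealed so far (including the current one) and
   the past payoffs [:: u(x^1,y^1); ...; u(x^(t-1),y^(t-1))],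
   it outputs the action x^t. *)
Definition pred_strategy (n d : nat) := seq 'rV[R]_d -> seq 'rV[R]_d -> 'rV[R]_n.

Section Play.
Variables (n m d : nat) (u : 'rV[R]_n -> 'rV[R]_m -> 'rV[R]_d).
Variables (sigma : pred_strategy n d) (v : nat -> 'rV[R]_d) (y : nat -> 'rV[R]_m).
(* times are indexed 0,1,2,... (time t here is time t+1 in the paper) *)

Fixpoint payoff_hist (t : nat) : seq 'rV[R]_d :=
  match t with
  | 0 => [::]
  | t'.+1 => rcons (payoff_hist t')
               (u (sigma [seq v i | i <- iota 0 t'.+1] (payoff_hist t')) (y t'))
  end.

Definition play_action (t : nat) : 'rV[R]_n :=
  sigma [seq v i | i <- iota 0 t.+1] (payoff_hist t).

Definition play_payoff (t : nat) : 'rV[R]_d := u (play_action t) (y t).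
End Play.

End Blackwell.

(* Main.v *)
Require Import Defs.
From HB Require Import structures.
From mathcomp Require Import all_boot all_order all_algebra.
From mathcomp Require Import all_classical all_reals all_analysis.
From mathcomp Require Import ring lra.
Import Order.TTheory GRing.Theory Num.Theory.
Import numFieldNormedType.Exports.
Local Open Scope classical_set_scope.
Local Open Scope ring_scope.

Lemma dotv_ge0 (R : realType) d (z : 'rV[R]_d) : 0 <= dotv z z.
Proof. by rewrite /dotv; apply: sumr_ge0 => i _; rewrite -expr2 sqr_ge0. Qed.

Lemma dotvBr (R : realType) d (a x y : 'rV[R]_d) :
  dotv a (x - y) = dotv a x - dotv a y.
Proof.
rewrite /dotv -sumrB; apply: eq_bigr => i _; rewrite !mxE; ring.
Qed.

Lemma dotv_cont (R : realType) d (w : 'rV[R]_d) :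
  continuous (fun s : 'rV[R]_d => dotv (w - s) (w - s)).
Proof.
rewrite /dotv => x.
have ci : forall i, {for x, continuous (fun s : 'rV[R]_d => (w - s) 0 i)}.
  move=> i.
  have -> : (fun s : 'rV[R]_d => (w - s) 0 i) = (fun s => w 0 i - s 0 i).
    by apply: funext => s; rewrite !mxE.
  apply: (@continuousB _ R^o). exact: cst_continuous.
  exact: coord_continuous.
elim: (index_enum _) => [|i r IH].
  have -> : (fun s : 'rV[R]_d => \sum_(i <- [::]) (w - s) 0 i * (w - s) 0 i) = fun=> 0.
    by apply: funext => s; rewrite big_nil.
  exact: cst_continuous.
have -> : (fun s : 'rV[R]_d => \sum_(j <- i :: r) (w - s) 0 j * (w - s) 0 j) =
   (fun s => (w - s) 0 i * (w - s) 0 i) + (fun s => \sum_(j <- r) (w - s) 0 j * (w - s) 0 j).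
  by apply: funext => s; rewrite big_cons.
apply: (@continuousD _ R^o) => //.
exact: (continuousM (ci i) (ci i)).
Qed.

Lemma abs_le_sq1 (R : realType) (a : R) : `|a| <= a ^+ 2 + 1.
Proof. rewrite ler_norml; apply/andP; split; nra. Qed.

Lemma coord_le_dotv (R : realType) d (z : 'rV[R]_d) j : (z 0 j) ^+ 2 <= dotv z z.
Proof.
rewrite /dotv (bigD1 j) //= -expr2 lerDl.
by apply: sumr_ge0 => i _; rewrite -expr2 sqr_ge0.
Qed.

Lemma proj_exists (R : realType) d (S : set 'rV[R]_d) (w s0 : 'rV[R]_d) :
  S s0 -> closed S -> convex_set (S : set (convex_lmodType 'rV[R]_d)) ->
  exists p, S p /\ forall s, S s -> dotv (w - p) (s - p) <= 0.
Proof.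
move=> Ss0 Scl Scvx.
pose f := fun s : 'rV[R]_d => dotv (w - s) (w - s).
pose K := S `&` (f @^-1` [set r | r <= f s0]).
have Kcl : closed K.
  apply: closedI => //; apply: preimage_closed; last exact: closed_le.
  by move=> x _; exact: dotv_cont.
have Kb : bounded_set K.
  exists (`|w| + f s0 + 1); split; first by rewrite realE; apply/orP; left;
    rewrite addr_ge0 // addr_ge0 // dotv_ge0.
  move=> r Hr z [Sz fz].
  apply: (le_trans _ (ltW Hr)).
  have -> : z = w - (w - z) by rewrite opprB addrC subrK.
  apply: (le_trans (ler_normB _ _)).
  rewrite -addrA lerD2l [leLHS]/Num.norm /= mx_normrE.
  apply: bigmax_le; first by rewrite addr_ge0 // dotv_ge0.
  move=> [i j] _ /=.
  rewrite (ord1 i).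
  have h1 := @abs_le_sq1 R ((w - z) 0 j).
  have h2 := @coord_le_dotv R d (w - z) j.
  have h3 : f z <= f s0 := fz.
  rewrite /f in h3. apply: (le_trans h1). rewrite lerD2r. exact: (le_trans h2 h3).
have Kc : compact K by apply: bounded_closed_compact.
have K0 : K !=set0 by exists s0; split => //; rewrite /f /=.
have [c cK cmin] := EVT_min_rV K0 Kc (continuous_subspaceT (@dotv_cont R d w)).
move: cK; rewrite inE => -[Sc fc].
exists c; split => // s Ss.
have fmin : forall s, S s -> f c <= f s.
  move=> s' Ss'; have [h|h] := leP (f s') (f s0).
    by apply: cmin; rewrite inE.
  exact: (le_trans fc (ltW h)).
rewrite leNgt; apply/negP => dpos.
set del := dotv (w - c) (s - c) in dpos.
set N := dotv (s - c) (s - c).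
have N0 : 0 <= N by apply: dotv_ge0.
pose lam := del / (N + del).
have Nd0 : 0 < N + del by rewrite ltr_wpDl.
have lam0 : 0 < lam by rewrite divr_gt0.
have lamN : lam * (N + del) = del by rewrite /lam mulfVK // gt_eqF.
have lam1 : lam <= 1 by rewrite ler_pdivrMr // mul1r lerDr.
have lamI : 0 <= lam <= 1 by rewrite (ltW lam0) lam1.
pose l01 : {i01 R} := Itv01 (proj1 (andP lamI)) (proj2 (andP lamI)).
have Sq : S (@conv _ (convex_lmodType _) l01 s c).
  by apply: set_mem; apply: Scvx; rewrite inE.
have := fmin _ Sq.
have -> : (@conv _ (convex_lmodType _) l01 s c) = lam *: s + (1 - lam) *: c by [].
have -> : f (lam *: s + (1 - lam) *: c) = f c - (2 * lam) * del + lam ^+ 2 * N.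
  rewrite /f /del /N /dotv !mulr_sumr -sumrB -big_split /=.
  by apply: eq_bigr => i _; rewrite !mxE; ring.
nra.
Qed.

Lemma key_step (R : realType) d (At v g p q : 'rV[R]_d) (tr : R) :
  0 <= tr ->
  dotv ((tr + 1)^-1 *: (At + v) - p) (g - p) <= 0 ->
  dotv ((tr + 1)^-1 *: (At + v) - p) (q - p) <= 0 ->
  dotv (At + g - (tr + 1) *: p) (At + g - (tr + 1) *: p)
    <= dotv (At - tr *: q) (At - tr *: q) + dotv (g - v) (g - v).
Proof.
move=> tr0 h1 h2.
set th := (tr + 1)^-1 *: (At + v) - p in h1 h2.
set b := (p - v) + tr *: (p - q).
have k0 : tr + 1 != 0 by rewrite gt_eqF // ltr_wpDl.
have E : dotv (At - tr *: q) (At - tr *: q) + dotv (g - v) (g - v) =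
  dotv (At + g - (tr + 1) *: p) (At + g - (tr + 1) *: p)
  - (2 * (tr + 1)) * dotv th (g - p) - (2 * (tr + 1) * tr) * dotv th (q - p)
  + dotv b b.
  rewrite /th /b /dotv !mulr_sumr -!sumrB -!big_split /=.
  apply: eq_bigr => i _; rewrite !mxE; field; exact: k0.
rewrite E.
have hb := @dotv_ge0 R d b.
have e1 : 0 <= - (2 * (tr + 1)) * dotv th (g - p) by nra.
have e2 : 0 <= - (2 * (tr + 1) * tr) * dotv th (q - p).
  rewrite mulNr -mulrN; apply: mulr_ge0; first nra. lra.
lra.
Qed.

Lemma iota_rcons t : iota 0 t.+1 = rcons (iota 0 t) t.
Proof. by rewrite -cats1 -addn1 iotaD. Qed.

Theorem mainTheorem6 (R : realType) (n m d : nat)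
  (X : set 'rV[R]_n) (Y : set 'rV[R]_m)
  (u : 'rV[R]_n -> 'rV[R]_m -> 'rV[R]_d) (S : set 'rV[R]_d) :
  X !=set0 -> compact X -> convex_set (X : set (convex_lmodType 'rV[R]_n)) ->
  Y !=set0 -> compact Y -> convex_set (Y : set (convex_lmodType 'rV[R]_m)) ->
  biaffine X Y u ->
  closed S -> convex_set (S : set (convex_lmodType 'rV[R]_d)) ->
  (forall (a : 'rV[R]_d) (b : R), S `<=` halfspace a b ->
      forceable X Y u (halfspace a b)) ->
  forall T : nat, (1 <= T)%N ->
  exists sigma : pred_strategy R n d,
    (forall vs gs, X (sigma vs gs)) /\
    forall (v : nat -> 'rV[R]_d) (y : nat -> 'rV[R]_m),
      (forall t, (t < T)%N -> Y (y t)) ->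
      exists2 s, S s &
        norm2 (s - T%:R^-1 *: \sum_(t < T) play_payoff u sigma v y t)
        <= (Num.sqrt T%:R)^-1 *
           (1 + 2 / T%:R *
              \sum_(t < T) norm2 (play_payoff u sigma v y t - v t) ^+ 2).
Proof.
move=> X0 _ _ Y0 _ _ _ Scl Scvx Hforce T T1.
have [s0 Ss0] : S !=set0.
  case: (pselect (S !=set0)) => // nS.
  have [xs _ Hxs] := Hforce 0 (-1) (fun z Sz => False_ind _ (nS (ex_intro _ z Sz))).
  case: Y0 => y0 Yy0; have := Hxs _ Yy0.
  rewrite /halfspace /= /dotv big1 => [h|i _]; last by rewrite mxE mul0r.
  exfalso; move: h; lra.
have [P HP] : {P : 'rV[R]_d -> 'rV[R]_d &
    forall w, S (P w) /\ forall s, S s -> dotv (w - P w) (s - P w) <= 0}.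
  exact: (@choice _ _ (fun w p => S p /\ forall s, S s -> dotv (w - p) (s - p) <= 0)
     (fun w => @proj_exists R d S w s0 Ss0 Scl Scvx)).
have [F HF] : {F : ('rV[R]_d * R)%type -> 'rV[R]_n & forall ab, X (F ab) /\
   (S `<=` halfspace ab.1 ab.2 -> forall y, Y y -> halfspace ab.1 ab.2 (u (F ab) y))}.
  apply: (@choice ('rV[R]_d * R)%type _ (fun ab x => X x /\
   (S `<=` halfspace ab.1 ab.2 -> forall y, Y y -> halfspace ab.1 ab.2 (u x y)))).
  move=> [a b]; case: (pselect (S `<=` halfspace a b)) => h.
    by have [xs Xxs H] := Hforce a b h; exists xs; split.
  by case: X0 => x0 Xx0; exists x0; split.
pose sigma : pred_strategy R n d := fun vs gs =>
  let k : R := (size vs)%:R in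
  let W := \sum_(g <- gs) g + last 0 vs in
  let p := P (k^-1 *: W) in
  F (k^-1 *: W - p, dotv (k^-1 *: W - p) p).
exists sigma; split; first by move=> vs gs; exact: (HF _).1.
move=> v y Yy.
set g := play_payoff u sigma v y.
have hist : forall t, payoff_hist u sigma v y t = [seq g i | i <- iota 0 t].
  elim => [//|t IH].
  by rewrite iota_rcons map_rcons -IH.
pose A t := \sum_(i < t) g i.
have force : forall t, (t < T)%N ->
  dotv ((t%:R + 1)^-1 *: (A t + v t) - P ((t%:R + 1)^-1 *: (A t + v t)))
       (g t - P ((t%:R + 1)^-1 *: (A t + v t))) <= 0.
  move=> t tT.
  set W := A t + v t.
  set p := P _.
  set th := _ - p.
  have Sh : S `<=` halfspace th (dotv th p).
    move=> s Ss; rewrite /halfspace /=.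
    have := (HP ((t%:R + 1)^-1 *: W)).2 s Ss.
    by rewrite dotvBr subr_le0.
  have eg : g t = u (F (th, dotv th p)) (y t).
    rewrite /g /play_payoff /play_action hist /sigma size_map size_iota big_map.
    rewrite iota_rcons map_rcons last_rcons.
    have eA : \sum_(j <- iota 0 t) g j = A t.
      by rewrite /A -(big_mkord xpredT) /index_iota subn0.
    by rewrite eA -natr1.
  have := (HF (th, dotv th p)).2 Sh _ (Yy t tT).
  by rewrite -eg /halfspace /= dotvBr subr_le0.
have main : forall t, (t <= T)%N -> exists2 q, S q &
    dotv (A t - t%:R *: q) (A t - t%:R *: q) <= \sum_(i < t) dotv (g i - v i) (g i - v i).
  elim => [_|t IH tT].
    exists s0 => //; rewrite /A !big_ord0 scale0r subr0 /dotv big1 // => i _.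
    by rewrite mxE mul0r.
  have [q Sq Hq] := IH (ltnW tT).
  set p := P ((t%:R + 1)^-1 *: (A t + v t)).
  exists p; first exact: (HP _).1.
  rewrite /A big_ord_recr /= (big_ord_recr t) /= -/(A t) -natr1.
  apply: (le_trans (@key_step R d (A t) (v t) (g t) p q t%:R (ler0n _ _) (force t tT) ((HP _).2 q Sq))).
  by rewrite lerD2r.
have [q Sq Hq] := main T (leqnn T).
exists q => //.
have -> : \sum_(t < T) norm2 (g t - v t) ^+ 2 = \sum_(t < T) dotv (g t - v t) (g t - v t).
  by apply: eq_bigr => i _; rewrite /norm2 sqr_sqrtr // dotv_ge0.
move: Hq; rewrite -/(A T).
set E := \sum_(i < T) _.
set D := dotv _ _ => DE.
have T0 : 0 < T%:R :> R by rewrite ltr0n.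
have eD : dotv (q - T%:R^-1 *: A T) (q - T%:R^-1 *: A T) = T%:R^-2 * D.
  rewrite /D /dotv mulr_sumr; apply: eq_bigr => i _; rewrite !mxE.
  by field; rewrite gt_eqF.
have E0 : 0 <= E by apply: sumr_ge0 => i _; exact: dotv_ge0.
have D0 : 0 <= D by exact: dotv_ge0.
rewrite /norm2 eD.
set yy := (Num.sqrt T%:R)^-1 * _.
have y0 : 0 <= yy.
  rewrite /yy; apply: mulr_ge0; first by rewrite invr_ge0 sqrtr_ge0.
  by rewrite addr_ge0 // mulr_ge0 // divr_ge0 // ler0n.
rewrite -(ger0_norm y0) -sqrtr_sqr ler_sqrt ?sqr_ge0 //.
rewrite /yy exprMn exprVn sqr_sqrtr ?ler0n //.
set c := T%:R^-1.
have c0 : 0 < c by rewrite invr_gt0.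
have cT : T%:R = c^-1 by rewrite invrK.
rewrite cT mulrC -/c.
rewrite exprVn invrK.
have h1 : c ^+ 2 * D <= c ^+ 2 * E by rewrite ler_wpM2l // sqr_ge0.
have h2 : 0 <= c ^+ 2 * E by rewrite mulr_ge0 // sqr_ge0.
have h3 : 0 <= c ^+ 3 * E ^+ 2 by rewrite mulr_ge0 // ?exprn_ge0 // ltW.
apply: (le_trans _ (_ : c ^+ 2 * E <= _)); first by rewrite mulrC.
nra.
Qed.
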